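(* For every round $r$ and every validator $v$, at most one block of round $r$ authored by $v$ has a certificate.
   Context: There are $n=3f+1$ validators, at most $f$ Byzantine; honest validators create exactly one block per round, Byzantine ones may create several blocks in the same round (equivocation). Every valid block of round $r$ has as parents at least $2f+1$ blocks of round $r-1$ from distinct validators. A block $b$ of round $r'$ is a vote for a block $L$ of round $r<r'$ with author $a$ if the first block with author $a$ and round $r$ encountered in the deterministic depth-first search from $b$ along parent references is $L$ (so a block votes for at most one block of a given author and round). For a fixed wave length $w\ge 4$, a block $c$ of round $r+w-1$ is a certificate for a block $L$ of round $r$ if at least $2f+1$ of $c$'s parents (blocks of round $r+w-2$) are votes for $L$; a block ''has a certificate'' if some such $c$ exists. *)

(* Defs.v *)
From mathcomp Require Import all_boot.
Set Implicit Arguments. Unset Strict Implicit. Unset Printing Implicit Defensive.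

Definition first_some (A B : Type) (g : A -> option B) (s : seq A) : option B :=
  foldr (fun x acc => if g x is Some y then Some y else acc) None s.

(* Deterministic (preorder, parents in list order) depth-first search from [b]:
   the first encountered block with author [a] and round [rd].  [fuel] bounds
   the depth; since parents have strictly smaller rounds, fuel [round b]
   makes the search exhaustive. *)
Fixpoint dfs_find (Block V : eqType) (author : Block -> V) (round : Block -> nat)
    (parents : Block -> seq Block) (a : V) (rd : nat) (fuel : nat) (b : Block)
    : option Block :=
  if (author b == a) && (round b == rd) then Some b else
  match fuel with
  | 0 => None
  | k.+1 => first_some (dfs_find author round parents a rd k) (parents b)
  end.

Definition is_vote (Block V : eqType) (author : Block -> V) (round : Block -> nat)
    (parents : Block -> seq Block) (b L : Block) : bool :=
  (round L < round b) &&
  (dfs_find author round parents (author L) (round L) (round b) b == Some L).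

Definition is_certificate (f w : nat) (Block V : eqType) (author : Block -> V)
    (round : Block -> nat) (parents : Block -> seq Block) (c L : Block) : bool :=
  (round c == round L + w - 1) &&
  (2 * f + 1 <= size (undup [seq author p | p <- parents c &
                      (round p == round L + w - 2) &&
                      is_vote author round parents p L])).

Definition has_certificate (f w : nat) (Block V : eqType) (author : Block -> V)
    (round : Block -> nat) (parents : Block -> seq Block) (L : Block) : Prop :=
  exists c, is_certificate f w author round parents c L.

(* Main.v *)
Require Import Defs.
From mathcomp Require Import all_boot.
From mathcomp Require Import zify.

Theorem lemma2 (f w : nat) (Block : eqType)
    (author : Block -> 'I_(3 * f + 1)) (round : Block -> nat)
    (parents : Block -> seq Block) (Byz : {set 'I_(3 * f + 1)}) :
  4 <= w ->
  #|Byz| <= f ->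
  (* honest validators create at most one block per round *)
  (forall b b', author b \notin Byz -> author b = author b' ->
     round b = round b' -> b = b') ->
  (* parents are from earlier rounds (DAG) *)
  (forall b p, p \in parents b -> round p < round b) ->
  (* validity: >= 2f+1 parents of the previous round from distinct validators *)
  (forall b, 0 < round b ->
     2 * f + 1 <= size (undup [seq author p | p <- parents b & round p == (round b).-1])) ->
  forall (r : nat) (v : 'I_(3 * f + 1)) (L L' : Block),
    round L = r -> author L = v -> round L' = r -> author L' = v ->
    has_certificate f w author round parents L ->
    has_certificate f w author round parents L' ->
    L = L'.
Proof.
move=> _ hByz honest _ _ r v L L' rL aL rL' aL' [c /andP [_ hc]] [c' /andP [_ hc']].
set s := undup _ in hc; set s' := undup _ in hc'.
set S := [set x in s]; set S' := [set x in s'].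
have cS : #|S| = size s by rewrite cardsE; apply/card_uniqP; apply: undup_uniq.
have cS' : #|S'| = size s' by rewrite cardsE; apply/card_uniqP; apply: undup_uniq.
have cU := cardsUI S S'.
have mU : #|S :|: S'| <= 3 * f + 1 by rewrite -[X in _ <= X]card_ord max_card.
have : ~~ ((S :&: S') \subset Byz).
  apply/negP => /subset_leq_card HH; have h1 := leq_trans HH hByz; rewrite cS cS' in cU; move: cU mU h1 hc hc'; generalize #|S :|: S'| #|S :&: S'| (size s) (size s'); clear; lia.
case/subsetPn => x; rewrite inE !inE /s /s' !mem_undup => /andP [xs xs'] xB.
case/mapP: xs => p; rewrite mem_filter => /andP [/andP [rp vp] _] xp.
case/mapP: xs' => p'; rewrite mem_filter => /andP [/andP [rp' vp'] _] xp'.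
have pp : p = p'.
  apply: honest; first by rewrite -xp.
    by rewrite -xp -xp'.
  by rewrite (eqP rp) (eqP rp') rL rL'.
subst p'.
move: vp vp' => /andP [_ /eqP e1] /andP [_ /eqP e2].
move: e2; rewrite aL' rL' -aL -rL e1; by case.
Qed.
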